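(* Let $p\ge2$ be an integer and let $(a_n)_{n\ge0}$ be the Patalan numbers of order $p$. Define $d_0=-1/p$ and $d_n=a_{n-1}$ for $n\ge1$, with generating function $D(x)=\sum_{n\ge0}d_nx^n=xA(x)-1/p$. Then $g(D(x))=x$, where $g(x)=\frac{1-(-px)^p}{p^2}$, and for every $n\ge2$, \[ d_n=(-1)^p\,p^{p-2}\,t^{(p)}_n , \] where $t^{(k)}_n$ are the truncated convolution powers of the sequence $(d_n)$.
   Context: For an integer $p\ge2$, the Patalan numbers of order $p$ are the coefficients $a_n$ of \[ A(x)=\sum_{n\ge0}a_nx^n=\frac{1-(1-p^2x)^{1/p}}{p\,x} \] (so $a_0=1$). For a sequence $(d_n)_{n\ge0}$ with generating function $D(x)$, set $d^{(k)}_n=[x^n]D(x)^k$ for $k\ge1$, $n\ge0$; the truncated convolution powers are defined recursively by $t^{(1)}_n=0$ for all $n$ and, for $k>1$, \[ t^{(k)}_n=\sum_{j=1}^{n-1}d_{n-j}\,d^{(k-1)}_j+d_0\,t^{(k-1)}_n \] (the sum being empty when $n\le1$). *)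

(* Defs.v *)
From HB Require Import structures.
From mathcomp Require Import all_boot all_order all_algebra.
Set Implicit Arguments. Unset Strict Implicit. Unset Printing Implicit Defensive.
Import Order.TTheory GRing.Theory Num.Theory.
Local Open Scope ring_scope.

Definition gbinom (r : rat) (k : nat) : rat :=
  (\prod_(i < k) (r - i%:R)) / (k`!)%:R.

(* Patalan numbers of order p: a_n = [x^n] (1 - (1 - p^2 x)^(1/p)) / (p x),
   where (1 - p^2 x)^(1/p) = sum_k binom(1/p, k) (-p^2 x)^k.
   Hence a_n = - binom(1/p, n+1) (-p^2)^(n+1) / p. *)
Definition patalan (p n : nat) : rat :=
  - (gbinom (p%:R)^-1 n.+1 * (- (p%:R ^+ 2)) ^+ n.+1) / p%:R.

Definition dseq (p n : nat) : rat :=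
  match n with
  | 0 => - (p%:R)^-1
  | m.+1 => patalan p m
  end.

(* d^(k)_n = [x^n] D(x)^k  (Cauchy convolution powers; k = 0 gives 1) *)
Fixpoint dpow (p k n : nat) : rat :=
  match k with
  | 0 => (n == 0%N)%:R
  | k'.+1 => \sum_(j < n.+1) dseq p (n - j) * dpow p k' j
  end.

(* truncated convolution powers: t^(1)_n = 0,
   t^(k)_n = sum_{j=1}^{n-1} d_(n-j) d^(k-1)_j + d_0 t^(k-1)_n  (k > 1);
   the value at k = 0 is an unused junk value 0. *)
Fixpoint tpow (p k n : nat) : rat :=
  match k with
  | 0 => 0
  | 1 => 0
  | (k'.+1) as k1 =>
      \sum_(1 <= j < n) dseq p (n - j) * dpow p k' j + dseq p 0 * tpow p k' n
  end.

(* Main.v *)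
Require Import Defs.
From HB Require Import structures.
From mathcomp Require Import all_boot all_order all_algebra.
From mathcomp Require Import ring.
Import Order.TTheory GRing.Theory Num.Theory.
Local Open Scope ring_scope.

Lemma conv_rec (Q a b : rat) (f g : nat -> rat) :
 (forall n, n.+1%:R * f n.+1 = Q * (n%:R - a) * f n) ->
 (forall n, n.+1%:R * g n.+1 = Q * (n%:R - b) * g n) ->
 forall n, n.+1%:R * (\sum_(j < n.+2) f (n.+1 - j)%N * g j)
   = Q * (n%:R - (a+b)) * \sum_(j < n.+1) f (n - j)%N * g j.
Proof.
move=> hf hg n.
have E: forall j : 'I_n.+2, n.+1%:R * (f (n.+1 - j)%N * g j)
   = (n.+1 - j)%N%:R * f (n.+1 - j)%N * g j + f (n.+1 - j)%N * (j%:R * g j).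
  move=> j; have hj : (j <= n.+1)%N by rewrite -ltnS.
  transitivity (((n.+1 - j)%N%:R + j%:R) * (f (n.+1 - j)%N * g j)); last ring.
  by rewrite -natrD subnK.
rewrite mulr_sumr (eq_bigr _ (fun j _ => E j)) big_split /=.
rewrite big_ord_recr /= subnn mulr0n !mul0r addr0.
rewrite [X in _ + X]big_ord_recl /= mulr0n mul0r mulr0 add0r.
rewrite mulr_sumr -big_split; apply: eq_bigr => i _ /=.
have hi : (i <= n)%N by rewrite -ltnS.
rewrite /bump /= add1n subSn // subSS hf hg natrB //; ring.
Qed.

Lemma natS_neq0 n : (n.+1%:R : rat) != 0.
Proof. by rewrite pnatr_eq0. Qed.

Lemma gbinomS r k : gbinom r k.+1 = gbinom r k * (r - k%:R) / k.+1%:R.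
Proof.
rewrite /gbinom big_ord_recr /= factS natrM.
have h1 := natS_neq0 k.
have h2 : ((k`!)%:R : rat) != 0 by rewrite pnatr_eq0 -lt0n fact_gt0.
field. by rewrite addrC natr1 h1 h2.
Qed.

Lemma gbinom0 r : gbinom r 0 = 1.
Proof. by rewrite /gbinom big_ord0 divr1. Qed.

Section S.
Variable p : nat.
Hypothesis hp : (2 <= p)%N.
Local Notation P := (p%:R : rat).
Lemma Pn0 : P != 0.
Proof. by rewrite pnatr_eq0 -lt0n (leq_trans _ hp). Qed.

Lemma dseq_rec n : n.+1%:R * dseq p n.+1 = P^+2 * (n%:R - P^-1) * dseq p n.
Proof.
have hP := Pn0.
case: n => [|m] /=; rewrite /patalan.
  rewrite gbinomS gbinom0 /=. field. by rewrite hP.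
rewrite gbinomS exprS.
have h1 := natS_neq0 m.+1. have h2 := natS_neq0 m.
field. rewrite hP /=.
have -> : (2 + m%:R : rat) = m.+2%:R by rewrite -[m.+2]/(2 + m)%N natrD.
exact: h1.
Qed.

Lemma dpow_rec k n : n.+1%:R * dpow p k n.+1 = P^+2 * (n%:R - k%:R * P^-1) * dpow p k n.
Proof.
elim: k n => [|k IH] n /=.
  by case: n => [|n] /=; rewrite ?mulr0 ?mul0r ?mulr0n ?mulr1n ?mulr0 //.
rewrite (@conv_rec _ _ _ _ _ dseq_rec IH); congr (_ * (_ - _) * _).
rewrite -natr1; ring.
Qed.

Lemma dpow0 k : dpow p k 0 = dseq p 0 ^+ k.
Proof. elim: k => [|k IH] /=; first by []. by rewrite big_ord1 /= IH exprS. Qed.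

Lemma dt k n : (1 <= n)%N ->
  dpow p k.+1 n - tpow p k.+1 n = k.+1%:R * dseq p 0 ^+ k * dseq p n.
Proof.
move=> hn; elim: k => [|k IH].
  rewrite /= big_ord_recl /= subn0 mulr1n big1 ?subr0 ?addr0 ?mulr1 ?mul1r //.
  by move=> i _; rewrite mulr0n mulr0.
have Ed : dpow p k.+2 n = \sum_(j < n.+1) dseq p (n-j) * dpow p k.+1 j by [].
have Et : tpow p k.+2 n = \sum_(1<=j<n) dseq p (n-j) * dpow p k.+1 j + dseq p 0 * tpow p k.+1 n by [].
rewrite Ed Et -(big_mkord (fun _ => true) (fun j => dseq p (n-j) * dpow p k.+1 j)) big_ltn //.
rewrite big_nat_recr // subn0 subnn dpow0.
have -> : dpow p k.+1 n = tpow p k.+1 n + k.+1%:R * dseq p 0 ^+ k * dseq p n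
  by rewrite -IH; ring.
rewrite -[k.+2%:R]natr1 exprS.
set S := \sum_(1 <= j < n) dseq p (n - j) * dpow p k.+1 j.
rewrite /=. ring.
Qed.
End S.

Theorem mainTheorem11 (p : nat) (hp : (2 <= p)%N) :
  (forall n : nat,
      ((n == 0%N)%:R - (- (p%:R : rat)) ^+ p * dpow p p n) / (p%:R ^+ 2)
      = (n == 1%N)%:R) /\
  (forall n : nat, (2 <= n)%N ->
      dseq p n = (-1) ^+ p * (p%:R : rat) ^+ (p - 2) * tpow p p n).
Proof.
have hP : (p%:R : rat) != 0 := Pn0 p hp.
have d0 : dseq p 0 = - (p%:R)^-1 by [].
have rp : forall n, n.+1%:R * dpow p p n.+1 = p%:R^+2 * (n%:R - 1) * dpow p p n.
  by move=> n; rewrite (dpow_rec p hp) divff.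
have h1 : dpow p p 1 = - p%:R^+2 * dseq p 0 ^+ p.
  by have := rp 0; rewrite mul1r dpow0 sub0r mulrN1 => ->.
have z2 : forall n, (2 <= n)%N -> dpow p p n = 0.
  elim => [|n IH] // hn.
  have e := rp n.
  have : n.+1%:R * dpow p p n.+1 = 0.
    rewrite e; case: n IH hn e => [|n] IH hn e //.
    case: n IH hn e => [|n] IH hn e; first by rewrite subrr mulr0 mul0r.
    by rewrite IH // mulr0.
  by move/eqP; rewrite mulf_eq0 pnatr_eq0 /= => /eqP.
split.
  case => [|[|n]].
  - rewrite dpow0 d0 -exprMn mulrNN divff // expr1n subrr mul0r //.
  - rewrite h1 mulrCA -exprMn d0 mulrNN divff // expr1n mulr1 /=.
    field; exact: hP.
  - by rewrite z2 // mulr0 subr0 mul0r.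
move=> n hn.
have := dt p (p.-1) n (ltnW hn).
rewrite prednK ?(leq_trans _ hp) // z2 // sub0r.
have [m hm] : exists m, p = m.+2 by exists p.-2; rewrite -(subnK hp) addn2.
have e2 : (m.+2 - 2 = m)%N by rewrite subn2.
rewrite hm e2 => ht.
have -> : tpow m.+2 m.+2 n = - (m.+2%:R * dseq m.+2 0 ^+ m.+1 * dseq m.+2 n)
  by rewrite -[LHS]opprK ht.
rewrite [dseq _ 0]/=.
set P : rat := m.+2%:R.
have hP' : P != 0 by rewrite /P pnatr_eq0.
set s : rat := (-1) ^+ m.
have ss : s * s = 1 by rewrite /s -exprD -signr_odd oddD addbb.
have eN : (- P^-1)^+m = s * P^-1^+m by rewrite /s -exprMn mulN1r.
rewrite !exprS eN -/s.
apply: (@eq_trans _ _ ((s*s) * (P^+m * P * (P^-1 * P^-1^+m) * dseq m.+2 n))); last ring.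
rewrite ss mul1r exprVn. field.
rewrite expf_neq0 //=. have -> : (2 + m%:R : rat) = P by rewrite /P -[m.+2]/(2 + m)%N natrD.
exact: hP'.
Qed.
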